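(* Let $B\subset\mathbf{P}^4$ be a rational normal quartic, $V=\mathrm{Sec}\,B$, $\mathbf{P}^2=\mathrm{Hilb}_2(B)$, $V_z$ the line spanned by the degree-$2$ divisor $b_z$ of $z\in\mathbf{P}^2$, $G(1,4)\subset\mathbf{P}^9$ the Plücker embedded Grassmannian of lines of $\mathbf{P}^4$, and $Z\subset G(1,4)$ the image of $z\mapsto[V_z]$. Let $A\subset Z$ be the sextic curve corresponding to a general conic of $\mathbf{P}^2$, let $R'\subset\mathbf{P}^4$ be the union of the lines parametrized by $A$, and let $Q$ be the quadric through $B$ with $R'=V\cap Q$ (for general $A$, $Q$ is smooth). Let $W\subset G(1,4)$ be the tangential quadratic complex of $Q$, i.e. the variety of lines tangent to $Q$, and let $T=\langle A\rangle\cap G(1,4)$. Then $W$ does not contain $T$. *)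

(* Defs.v *)
(* Projective geometry over an algebraically closed field F
   of characteristic 0.  Points of P^n are represented by nonzero vectors of
   F^(n+1) (row vectors); projective subsets by the cones over them. *)
From HB Require Import structures.
From mathcomp Require Import all_boot all_order all_algebra.
From mathcomp Require Import mpoly.
Set Implicit Arguments. Unset Strict Implicit. Unset Printing Implicit Defensive.
Import GRing.Theory.
Local Open Scope ring_scope.

Section Defs.
Variable F : closedFieldType.

Definition ver4 (s t : F) : 'rV[F]_5 := \row_(i < 5) (s ^+ (4 - i) * t ^+ i).

Definition qf (S : 'M[F]_5) (x : 'rV[F]_5) : F := (x *m S *m x^T) 0 0.
Definition bil (S : 'M[F]_5) (x y : 'rV[F]_5) : F := (x *m S *m y^T) 0 0.

(* A point z = (z0:z1:z2) of P^2 = Hilb_2(B) is the binary quadratic form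
   z0 s^2 + z1 s t + z2 t^2 (a degree-2 divisor of P^1 ~ B);
   binary forms of degree d are encoded by their dehomogenisations
   sum_i f_i X^i (coefficient of s^(d-i) t^i). *)
Definition qpoly (z : 'rV[F]_3) : {poly F} := Poly [:: z 0 0; z 0 1; z 0 2].

(* pull-back to P^1 of the hyperplane {x | x *m h = 0} along
   (s:t) |-> ver4 s t *m M : a binary quartic *)
Definition pullback (M : 'M[F]_5) (h : 'cV[F]_5) : {poly F} :=
  Poly [seq (M *m h) i 0 | i <- enum 'I_5].

Definition bdiv (q f : {poly F}) : Prop :=
  exists g : {poly F}, (size g <= 3)%N /\ f = q * g.

(* cone over V_z = linear span of the divisor b_z on B: the intersection of
   all hyperplanes whose pull-back divisor on B contains b_z *)
Definition Vz (M : 'M[F]_5) (z : 'rV[F]_3) (x : 'rV[F]_5) : Prop :=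
  forall h : 'cV[F]_5, bdiv (qpoly z) (pullback M h) -> (x *m h) 0 0 = 0.

Definition secV (M : 'M[F]_5) (x : 'rV[F]_5) : Prop :=
  exists z : 'rV[F]_3, z != 0 /\ Vz M z x.

(* Pluecker vector of the line spanned by u, v, as a skew 5x5 matrix
   (coordinates in wedge^2 F^5 = F^10, i.e. P^9) *)
Definition wedge (u v : 'rV[F]_5) : 'M[F]_5 := u^T *m v - v^T *m u.

Definition grass (P : 'M[F]_5) : Prop :=
  exists u v : 'rV[F]_5, P = wedge u v /\ P != 0.

Definition coneZ_at (M : 'M[F]_5) (z : 'rV[F]_3) (P : 'M[F]_5) : Prop :=
  exists u v : 'rV[F]_5, Vz M z u /\ Vz M z v /\ P = wedge u v /\ P != 0.

Definition conic_eval (c : 'I_6 -> F) (z : 'rV[F]_3) : F :=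
  c (@Ordinal 6 0 isT) * z 0 0 ^+ 2 + c (@Ordinal 6 1 isT) * z 0 1 ^+ 2
  + c (@Ordinal 6 2 isT) * z 0 2 ^+ 2 + c (@Ordinal 6 3 isT) * z 0 0 * z 0 1
  + c (@Ordinal 6 4 isT) * z 0 0 * z 0 2 + c (@Ordinal 6 5 isT) * z 0 1 * z 0 2.

Definition on_conic (c : 'I_6 -> F) (z : 'rV[F]_3) : Prop :=
  z != 0 /\ conic_eval c z = 0.

Definition coneA (M : 'M[F]_5) (c : 'I_6 -> F) (P : 'M[F]_5) : Prop :=
  exists z, on_conic c z /\ coneZ_at M z P.

Definition Rprime (M : 'M[F]_5) (c : 'I_6 -> F) (x : 'rV[F]_5) : Prop :=
  exists z, on_conic c z /\ Vz M z x.

Definition spanA (M : 'M[F]_5) (c : 'I_6 -> F) (P : 'M[F]_5) : Prop :=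
  exists (k : nat) (a : 'I_k -> F) (X : 'I_k -> 'M[F]_5),
    (forall i, coneA M c (X i)) /\ P = \sum_(i < k) a i *: X i.

Definition Tset (M : 'M[F]_5) (c : 'I_6 -> F) (P : 'M[F]_5) : Prop :=
  spanA M c P /\ grass P.

(* the line spanned by u, v is tangent to the quadric {qf S = 0}: there is a
   point p of the line on the quadric such that the line lies in the tangent
   hyperplane at p *)
Definition tangent_line (S : 'M[F]_5) (u v : 'rV[F]_5) : Prop :=
  exists a b : F, let p := a *: u + b *: v in
    p != 0 /\ qf S p = 0 /\ bil S u p = 0 /\ bil S v p = 0.

Definition Wtan (S : 'M[F]_5) (P : 'M[F]_5) : Prop :=
  exists u v : 'rV[F]_5, P = wedge u v /\ P != 0 /\ tangent_line S u v.

Definition quadric_for (M : 'M[F]_5) (c : 'I_6 -> F) (S : 'M[F]_5) : Prop :=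
  S^T = S /\ S != 0 /\
  (forall s t : F, qf S (ver4 s t *m M) = 0) /\
  (forall x : 'rV[F]_5, x != 0 -> ((secV M x /\ qf S x = 0) <-> Rprime M c x)).

End Defs.

(* Main.v *)
Require Import Defs.
From HB Require Import structures.
From mathcomp Require Import all_boot all_order all_algebra.
From mathcomp Require Import mpoly.
From mathcomp Require Import ring.
Import GRing.Theory.
Local Open Scope ring_scope.
Set Implicit Arguments. Unset Strict Implicit. Unset Printing Implicit Defensive.

Section Main.
Variable F : closedFieldType.

Definition row5 (a b c d e : F) : 'rV[F]_5 := \row_(i < 5) nth 0 [:: a; b; c; d; e] i.
Definition row3 (a b c : F) : 'rV[F]_3 := \row_(i < 3) nth 0 [:: a; b; c] i.

Lemma pull_coef (M : 'M[F]_5) h (k : 'I_5) : (pullback M h)`_k = (M *m h) k 0.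
Proof.
rewrite /pullback coef_Poly (nth_map k) ?size_enum_ord //.
by rewrite nth_ord_enum.
Qed.

Lemma Vz_rec z0 z1 z2 x0 x1 x2 x3 x4 :
  z0 * x0 + z1 * x1 + z2 * x2 = 0 ->
  z0 * x1 + z1 * x2 + z2 * x3 = 0 ->
  z0 * x2 + z1 * x3 + z2 * x4 = 0 ->
  Vz 1 (row3 z0 z1 z2) (row5 x0 x1 x2 x3 x4).
Proof.
move=> e0 e1 e2 h [g [Hg Heq]].
have hk : forall k : 'I_5, h k 0 = (Defs.qpoly (row3 z0 z1 z2) * g)`_k.
  by move=> k; rewrite -Heq pull_coef mul1mx.
have g3 : g`_3 = 0 by rewrite nth_default.
have g4 : g`_4 = 0 by rewrite nth_default // (leq_trans Hg).
rewrite !mxE !big_ord_recl big_ord0 !hk.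
rewrite /Defs.qpoly !coefM !big_ord_recl !big_ord0 !coef_Poly !mxE /=.
rewrite g3 g4.
set G0 := g`_0; set G1 := g`_1; set G2 := g`_2.
transitivity (G0 * (z0 * x0 + z1 * x1 + z2 * x2) + G1 * (z0 * x1 + z1 * x2 + z2 * x3) + G2 * (z0 * x2 + z1 * x3 + z2 * x4)).
  ring.
by rewrite e0 e1 e2; ring.
Qed.

Lemma Vz_tr (M : 'M[F]_5) z y : Vz 1 z y -> Vz M z (y *m M).
Proof.
move=> H h Hb; rewrite -mulmxA; apply: H.
suff -> : pullback 1 (M *m h) = pullback M h by [].
by rewrite /pullback mul1mx.
Qed.

Lemma wedge_tr (M : 'M[F]_5) u v : wedge (u *m M) (v *m M) = M^T *m wedge u v *m M.
Proof. by rewrite /wedge mulmxBr mulmxBl !trmx_mul !mulmxA. Qed.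

Lemma conj_neq0 (M : 'M[F]_5) X : M \in unitmx -> X != 0 -> M^T *m X *m M != 0.
Proof.
move=> HM; apply: contra => /eqP H.
have HMt : M^T \in unitmx by rewrite unitmx_tr.
have := congr1 (fun Y => invmx M^T *m (Y *m invmx M)) H.
by rewrite mul0mx mulmx0 mulmxK // mulKmx // => ->.
Qed.

Lemma coneA_tr (M : 'M[F]_5) c X : M \in unitmx -> coneA 1 c X -> coneA M c (M^T *m X *m M).
Proof.
move=> HM [z [Hz [u [v [Hu [Hv [HX HX0]]]]]]].
exists z; split => //; exists (u *m M), (v *m M).
split; first exact: Vz_tr.
split; first exact: Vz_tr.
rewrite wedge_tr HX; split => //. apply: conj_neq0 => //. by rewrite -HX. Qed.

Lemma spanA_add (M : 'M[F]_5) c P Q : spanA M c P -> spanA M c Q -> spanA M c (P + Q).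
Proof.
move=> [k1 [a1 [X1 [H1 ->]]]] [k2 [a2 [X2 [H2 ->]]]].
exists (k1 + k2)%N, (fun i => match split i with inl j => a1 j | inr j => a2 j end),
  (fun i => match split i with inl j => X1 j | inr j => X2 j end).
split.
  by move=> i; case: (split i).
rewrite big_split_ord /=; congr (_ + _); apply: eq_bigr => i _.
  by rewrite (unsplitK (inl _ i)).
by rewrite (unsplitK (inr _ i)).
Qed.

Lemma spanA_one (M : 'M[F]_5) c a X : coneA M c X -> spanA M c (a *: X).
Proof.
move=> H; exists 1%N, (fun _ => a), (fun _ => X); split => //.
by rewrite big_ord1.
Qed.

Lemma spanA_tr (M : 'M[F]_5) c P : M \in unitmx -> spanA 1 c P -> spanA M c (M^T *m P *m M).
Proof.
move=> HM [k [a [X [H ->]]]].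
exists k, a, (fun i => M^T *m X i *m M); split.
  by move=> i; apply: coneA_tr.
rewrite mulmx_sumr mulmx_suml; apply: eq_bigr => i _.
by rewrite -scalemxAr -scalemxAl.
Qed.

Definition C0 (c : 'I_6 -> F) := c (@Ordinal 6 0 isT).
Definition C1 (c : 'I_6 -> F) := c (@Ordinal 6 1 isT).
Definition C2 (c : 'I_6 -> F) := c (@Ordinal 6 2 isT).
Definition C3 (c : 'I_6 -> F) := c (@Ordinal 6 3 isT).
Definition C4 (c : 'I_6 -> F) := c (@Ordinal 6 4 isT).
Definition C5 (c : 'I_6 -> F) := c (@Ordinal 6 5 isT).

Definition cev (k0 k1 k2 k3 k4 k5 r t : F) :=
  k0 * r ^+ 2 + k1 * t ^+ 2 + k2 + k3 * r * t + k4 * r + k5 * t.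

Lemma conic_row3 c r t :
  conic_eval c (row3 r t 1) = cev (C0 c) (C1 c) (C2 c) (C3 c) (C4 c) (C5 c) r t.
Proof. by rewrite /conic_eval /cev !mxE /= /C0 /C1 /C2 /C3 /C4 /C5; ring. Qed.

Definition discG (R : comPzRingType) (k0 k1 k2 k3 k4 k5 t : R) : R :=
  (k3 * t + k4) ^+ 2 - 4 * k0 * (k1 * t ^+ 2 + k5 * t + k2).

Hypothesis HF : [pchar F] =i pred0.

Lemma natF_neq0 n : (n.+1%:R : F) != 0.
Proof. by move/pcharf0P: HF => ->. Qed.

Lemma two_neq0 : (2 : F) != 0. Proof. exact: (natF_neq0 1). Qed.
Lemma four_neq0 : (4 : F) != 0. Proof. exact: (natF_neq0 3). Qed.

Lemma sqrt_ex (d : F) : exists s, s ^+ 2 = d.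
Proof.
have [x Hx] := @solve_monicpoly F 2 (fun i => if i == 0%N then d else 0) isT.
by exists x; rewrite Hx !big_ord_recl big_ord0 /= expr0 mulr1 mul0r !addr0.
Qed.

Lemma pair_pt k0 k1 k2 k3 k4 k5 t beta gamma :
  k0 != 0 -> discG k0 k1 k2 k3 k4 k5 t != 0 ->
  exists r r' al al',
    [/\ cev k0 k1 k2 k3 k4 k5 r t = 0, cev k0 k1 k2 k3 k4 k5 r' t = 0,
        al + al' - beta = 0 & al * r + al' * r' - gamma = 0].
Proof.
move=> Hk0 Hd; have [s Hs] := sqrt_ex (discG k0 k1 k2 k3 k4 k5 t).
have Hs0 : s != 0 by apply: contraNneq Hd => Hs0; rewrite -Hs Hs0 expr0n.
have H2 := two_neq0; have H4 := four_neq0.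
pose B := k3 * t + k4.
exists ((- B + s) / (2 * k0)), ((- B - s) / (2 * k0)),
  (k0 * (gamma - beta * ((- B - s) / (2 * k0))) / s),
  (beta - k0 * (gamma - beta * ((- B - s) / (2 * k0))) / s).
split.
- rewrite /cev; transitivity ((s ^+ 2 - discG k0 k1 k2 k3 k4 k5 t) / (4 * k0)).
    by rewrite /discG /B; field; rewrite H4 Hk0.
  by rewrite Hs subrr mul0r.
- rewrite /cev; transitivity ((s ^+ 2 - discG k0 k1 k2 k3 k4 k5 t) / (4 * k0)).
    by rewrite /discG /B; field; rewrite H4 Hk0.
  by rewrite Hs subrr mul0r.
- by ring.
- by rewrite /B; field; rewrite H2 Hk0 Hs0.
Qed.

Definition w1 (z0 z1 : F) := row5 1 0 (- z0) (z0 * z1) (z0 ^+ 2 - z0 * z1 ^+ 2).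
Definition w2 (z0 z1 : F) := row5 0 1 (- z1) (z1 ^+ 2 - z0) (2 * z0 * z1 - z1 ^+ 3).

Definition skew (p01 p02 p03 p04 p12 p13 p14 p23 p24 p34 : F) : 'M[F]_5 :=
  \matrix_(i < 5, j < 5) nth 0 (nth [::]
    [:: [:: 0; p01; p02; p03; p04];
        [:: - p01; 0; p12; p13; p14];
        [:: - p02; - p12; 0; p23; p24];
        [:: - p03; - p13; - p23; 0; p34];
        [:: - p04; - p14; - p24; - p34; 0]] i) j.

Definition Lam (a00 a01 a10 a02 a11 a20 a03 a12 a21 a30 : F) : 'M[F]_5 :=
  skew a00 (- a01) (a02 - a10) (2 * a11 - a03) a10 (- a11) (a12 - a20) a20 (- a21) a30.

Definition Xz (z0 z1 : F) : 'M[F]_5 :=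
  Lam 1 z1 z0 (z1 ^+ 2) (z0 * z1) (z0 ^+ 2) (z1 ^+ 3) (z0 * z1 ^+ 2) (z0 ^+ 2 * z1) (z0 ^+ 3).

Lemma wedgeE (u v : 'rV[F]_5) i j : wedge u v i j = u 0 i * v 0 j - v 0 i * u 0 j.
Proof. by rewrite /wedge !mxE !big_ord1 !mxE. Qed.

Lemma ord5_cases (P : 'I_5 -> Prop) :
  P (@Ordinal 5 0 isT) -> P (@Ordinal 5 1 isT) -> P (@Ordinal 5 2 isT) ->
  P (@Ordinal 5 3 isT) -> P (@Ordinal 5 4 isT) -> forall i, P i.
Proof.
move=> H0 H1 H2 H3 H4 [[|[|[|[|[|k]]]]] Hk] //.
- by rewrite (bool_irrelevance Hk isT).
- by rewrite (bool_irrelevance Hk isT).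
- by rewrite (bool_irrelevance Hk isT).
- by rewrite (bool_irrelevance Hk isT).
- by rewrite (bool_irrelevance Hk isT).
Qed.

Lemma wedge_w z0 z1 : wedge (w1 z0 z1) (w2 z0 z1) = Xz z0 z1.
Proof.
apply/matrixP; apply: ord5_cases; apply: ord5_cases;
  by rewrite wedgeE !mxE /=; ring.
Qed.

Lemma coneA_pt c r t : conic_eval c (row3 r t 1) = 0 -> coneA 1 c (Xz r t).
Proof.
move=> Hc; exists (row3 r t 1); split.
  split => //; apply/negP => /eqP /matrixP /(_ 0 (@Ordinal 3 2 isT)).
  by rewrite !mxE /= => /eqP; rewrite oner_eq0.
exists (w1 r t), (w2 r t); split.
  by apply: Vz_rec; ring.
split; first by apply: Vz_rec; ring.
rewrite wedge_w; split => //.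
apply/negP => /eqP /matrixP /(_ (@Ordinal 5 0 isT) (@Ordinal 5 1 isT)).
by rewrite !mxE /= => /eqP; rewrite oner_eq0.
Qed.

Lemma lc20 (x y k1 k2 k3 k4 k5 k6 k7 k8 k9 k10 k11 k12 k13 k14 k15 k16 k17 k18 k19 k20 e1 e2 e3 e4 e5 e6 e7 e8 e9 e10 e11 e12 e13 e14 e15 e16 e17 e18 e19 e20 : F) :
  e1 = 0 -> e2 = 0 -> e3 = 0 -> e4 = 0 -> e5 = 0 -> e6 = 0 -> e7 = 0 -> e8 = 0 -> e9 = 0 -> e10 = 0 -> e11 = 0 -> e12 = 0 -> e13 = 0 -> e14 = 0 -> e15 = 0 -> e16 = 0 -> e17 = 0 -> e18 = 0 -> e19 = 0 -> e20 = 0 -> x - y = k1 * e1 + k2 * e2 + k3 * e3 + k4 * e4 + k5 * e5 + k6 * e6 + k7 * e7 + k8 * e8 + k9 * e9 + k10 * e10 + k11 * e11 + k12 * e12 + k13 * e13 + k14 * e14 + k15 * e15 + k16 * e16 + k17 * e17 + k18 * e18 + k19 * e19 + k20 * e20 -> x = y.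
Proof.
move=> ->; move=> ->; move=> ->; move=> ->; move=> ->; move=> ->; move=> ->; move=> ->; move=> ->; move=> ->; move=> ->; move=> ->; move=> ->; move=> ->; move=> ->; move=> ->; move=> ->; move=> ->; move=> ->; move=> ->;
by move=> H; apply/eqP; rewrite -subr_eq0 H; apply/eqP; ring.
Qed.

Lemma spanA_Lam c a00 a01 a10 a02 a11 a20 a03 a12 a21 a30 :
  C0 c != 0 ->
  discG (C0 c) (C1 c) (C2 c) (C3 c) (C4 c) (C5 c) 0 != 0 ->
  discG (C0 c) (C1 c) (C2 c) (C3 c) (C4 c) (C5 c) 1 != 0 ->
  discG (C0 c) (C1 c) (C2 c) (C3 c) (C4 c) (C5 c) (-1) != 0 ->
  discG (C0 c) (C1 c) (C2 c) (C3 c) (C4 c) (C5 c) 2 != 0 ->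
  C0 c * a20 + C1 c * a02 + C2 c * a00 + C3 c * a11 + C4 c * a10 + C5 c * a01 = 0 ->
  C0 c * a30 + C1 c * a12 + C2 c * a10 + C3 c * a21 + C4 c * a20 + C5 c * a11 = 0 ->
  C0 c * a21 + C1 c * a03 + C2 c * a01 + C3 c * a12 + C4 c * a11 + C5 c * a02 = 0 ->
  spanA 1 c (Lam a00 a01 a10 a02 a11 a20 a03 a12 a21 a30).
Proof.
move=> Hk0 Hd0 Hd1 Hdm Hd2 E1 E2 E3.
have n2 : (2 : F) != 0 := two_neq0.
have n6 : (6 : F) != 0 := natF_neq0 5.
have [r0 [s0 [p0 [q0 [h0 g0 e0 f0]]]]] := pair_pt (t := 0) ((a00 - (a02 - 4*((a03 - a01)/6)) - (a03 - a01)/6)) (a10 - a12) Hk0 Hd0.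
have [r1 [s1 [p1 [q1 [h1 g1 e1 f1]]]]] := pair_pt (t := 1) (((a02 - 4*((a03 - a01)/6)) + (a01 - 2*((a03 - a01)/6)))/2) ((a12 + a11)/2) Hk0 Hd1.
have [rm [sm [pm [qm [hm gm em fm]]]]] := pair_pt (t := (-1)) (((a02 - 4*((a03 - a01)/6)) - (a01 - 2*((a03 - a01)/6)))/2) ((a12 - a11)/2) Hk0 Hdm.
have [r2 [s2 [p2 [q2 [h2 g2 e2 f2]]]]] := pair_pt (t := 2) ((a03 - a01)/6) 0 Hk0 Hd2.
have Ha00 : a00 = (p0 + q0 + p1 + q1 + pm + qm + p2 + q2).
  apply: (lc20 (k1 := (- 1)) (k2 := (- 1)) (k3 := (- 1)) (k4 := (- 1)) (k5 := 0) (k6 := 0) (k7 := 0) (k8 := 0) (k9 := 0) (k10 := 0) (k11 := 0) (k12 := 0) (k13 := 0) (k14 := 0) (k15 := 0) (k16 := 0) (k17 := 0) (k18 := 0) (k19 := 0) (k20 := 0) e0 e1 em e2 (erefl (0:F)) (erefl (0:F)) (erefl (0:F)) (erefl (0:F)) (erefl (0:F)) (erefl (0:F)) (erefl (0:F)) (erefl (0:F)) (erefl (0:F)) (erefl (0:F)) (erefl (0:F)) (erefl (0:F)) (erefl (0:F)) (erefl (0:F)) (erefl (0:F)) (erefl (0:F))).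
  by rewrite /cev; field; rewrite ?Hk0 ?n2 ?n6.
have Ha01 : a01 = (p0*0 + q0*0 + p1*1 + q1*1 + pm*(-1) + qm*(-1) + p2*2 + q2*2).
  apply: (lc20 (k1 := (- 0)) (k2 := (- 1)) (k3 := (- (-1))) (k4 := (- 2)) (k5 := 0) (k6 := 0) (k7 := 0) (k8 := 0) (k9 := 0) (k10 := 0) (k11 := 0) (k12 := 0) (k13 := 0) (k14 := 0) (k15 := 0) (k16 := 0) (k17 := 0) (k18 := 0) (k19 := 0) (k20 := 0) e0 e1 em e2 (erefl (0:F)) (erefl (0:F)) (erefl (0:F)) (erefl (0:F)) (erefl (0:F)) (erefl (0:F)) (erefl (0:F)) (erefl (0:F)) (erefl (0:F)) (erefl (0:F)) (erefl (0:F)) (erefl (0:F)) (erefl (0:F)) (erefl (0:F)) (erefl (0:F)) (erefl (0:F))).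
  by rewrite /cev; field; rewrite ?Hk0 ?n2 ?n6.
have Ha02 : a02 = (p0*0^+2 + q0*0^+2 + p1*1^+2 + q1*1^+2 + pm*(-1)^+2 + qm*(-1)^+2 + p2*2^+2 + q2*2^+2).
  apply: (lc20 (k1 := (- 0^+2)) (k2 := (- 1^+2)) (k3 := (- (-1)^+2)) (k4 := (- 2^+2)) (k5 := 0) (k6 := 0) (k7 := 0) (k8 := 0) (k9 := 0) (k10 := 0) (k11 := 0) (k12 := 0) (k13 := 0) (k14 := 0) (k15 := 0) (k16 := 0) (k17 := 0) (k18 := 0) (k19 := 0) (k20 := 0) e0 e1 em e2 (erefl (0:F)) (erefl (0:F)) (erefl (0:F)) (erefl (0:F)) (erefl (0:F)) (erefl (0:F)) (erefl (0:F)) (erefl (0:F)) (erefl (0:F)) (erefl (0:F)) (erefl (0:F)) (erefl (0:F)) (erefl (0:F)) (erefl (0:F)) (erefl (0:F)) (erefl (0:F))).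
  by rewrite /cev; field; rewrite ?Hk0 ?n2 ?n6.
have Ha03 : a03 = (p0*0^+3 + q0*0^+3 + p1*1^+3 + q1*1^+3 + pm*(-1)^+3 + qm*(-1)^+3 + p2*2^+3 + q2*2^+3).
  apply: (lc20 (k1 := (- 0^+3)) (k2 := (- 1^+3)) (k3 := (- (-1)^+3)) (k4 := (- 2^+3)) (k5 := 0) (k6 := 0) (k7 := 0) (k8 := 0) (k9 := 0) (k10 := 0) (k11 := 0) (k12 := 0) (k13 := 0) (k14 := 0) (k15 := 0) (k16 := 0) (k17 := 0) (k18 := 0) (k19 := 0) (k20 := 0) e0 e1 em e2 (erefl (0:F)) (erefl (0:F)) (erefl (0:F)) (erefl (0:F)) (erefl (0:F)) (erefl (0:F)) (erefl (0:F)) (erefl (0:F)) (erefl (0:F)) (erefl (0:F)) (erefl (0:F)) (erefl (0:F)) (erefl (0:F)) (erefl (0:F)) (erefl (0:F)) (erefl (0:F))).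
  by rewrite /cev; field; rewrite ?Hk0 ?n2 ?n6.
have Ha10 : a10 = (p0*r0 + q0*s0 + p1*r1 + q1*s1 + pm*rm + qm*sm + p2*r2 + q2*s2).
  apply: (lc20 (k1 := (- 1)) (k2 := (- 1)) (k3 := (- 1)) (k4 := (- 1)) (k5 := 0) (k6 := 0) (k7 := 0) (k8 := 0) (k9 := 0) (k10 := 0) (k11 := 0) (k12 := 0) (k13 := 0) (k14 := 0) (k15 := 0) (k16 := 0) (k17 := 0) (k18 := 0) (k19 := 0) (k20 := 0) f0 f1 fm f2 (erefl (0:F)) (erefl (0:F)) (erefl (0:F)) (erefl (0:F)) (erefl (0:F)) (erefl (0:F)) (erefl (0:F)) (erefl (0:F)) (erefl (0:F)) (erefl (0:F)) (erefl (0:F)) (erefl (0:F)) (erefl (0:F)) (erefl (0:F)) (erefl (0:F)) (erefl (0:F))).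
  by rewrite /cev; field; rewrite ?Hk0 ?n2 ?n6.
have Ha11 : a11 = (p0*r0*0 + q0*s0*0 + p1*r1*1 + q1*s1*1 + pm*rm*(-1) + qm*sm*(-1) + p2*r2*2 + q2*s2*2).
  apply: (lc20 (k1 := (- 0)) (k2 := (- 1)) (k3 := (- (-1))) (k4 := (- 2)) (k5 := 0) (k6 := 0) (k7 := 0) (k8 := 0) (k9 := 0) (k10 := 0) (k11 := 0) (k12 := 0) (k13 := 0) (k14 := 0) (k15 := 0) (k16 := 0) (k17 := 0) (k18 := 0) (k19 := 0) (k20 := 0) f0 f1 fm f2 (erefl (0:F)) (erefl (0:F)) (erefl (0:F)) (erefl (0:F)) (erefl (0:F)) (erefl (0:F)) (erefl (0:F)) (erefl (0:F)) (erefl (0:F)) (erefl (0:F)) (erefl (0:F)) (erefl (0:F)) (erefl (0:F)) (erefl (0:F)) (erefl (0:F)) (erefl (0:F))).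
  by rewrite /cev; field; rewrite ?Hk0 ?n2 ?n6.
have Ha12 : a12 = (p0*r0*0^+2 + q0*s0*0^+2 + p1*r1*1^+2 + q1*s1*1^+2 + pm*rm*(-1)^+2 + qm*sm*(-1)^+2 + p2*r2*2^+2 + q2*s2*2^+2).
  apply: (lc20 (k1 := (- 0^+2)) (k2 := (- 1^+2)) (k3 := (- (-1)^+2)) (k4 := (- 2^+2)) (k5 := 0) (k6 := 0) (k7 := 0) (k8 := 0) (k9 := 0) (k10 := 0) (k11 := 0) (k12 := 0) (k13 := 0) (k14 := 0) (k15 := 0) (k16 := 0) (k17 := 0) (k18 := 0) (k19 := 0) (k20 := 0) f0 f1 fm f2 (erefl (0:F)) (erefl (0:F)) (erefl (0:F)) (erefl (0:F)) (erefl (0:F)) (erefl (0:F)) (erefl (0:F)) (erefl (0:F)) (erefl (0:F)) (erefl (0:F)) (erefl (0:F)) (erefl (0:F)) (erefl (0:F)) (erefl (0:F)) (erefl (0:F)) (erefl (0:F))).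
  by rewrite /cev; field; rewrite ?Hk0 ?n2 ?n6.
have Ha20 : a20 = (p0*r0^+2 + q0*s0^+2 + p1*r1^+2 + q1*s1^+2 + pm*rm^+2 + qm*sm^+2 + p2*r2^+2 + q2*s2^+2).
  apply: (lc20 (k1 := (- p0 / C0 c)) (k2 := (- q0 / C0 c)) (k3 := (- p1 / C0 c)) (k4 := (- q1 / C0 c)) (k5 := (- pm / C0 c)) (k6 := (- qm / C0 c)) (k7 := (- p2 / C0 c)) (k8 := (- q2 / C0 c)) (k9 := ((C3 c * 0 + C4 c) / C0 c)) (k10 := ((C1 c * 0^+2 + C5 c * 0 + C2 c) / C0 c)) (k11 := ((C3 c * 1 + C4 c) / C0 c)) (k12 := ((C1 c * 1^+2 + C5 c * 1 + C2 c) / C0 c)) (k13 := ((C3 c * (-1) + C4 c) / C0 c)) (k14 := ((C1 c * (-1)^+2 + C5 c * (-1) + C2 c) / C0 c)) (k15 := ((C3 c * 2 + C4 c) / C0 c)) (k16 := ((C1 c * 2^+2 + C5 c * 2 + C2 c) / C0 c)) (k17 := (1 / C0 c)) (k18 := 0) (k19 := 0) (k20 := 0) h0 g0 h1 g1 hm gm h2 g2 f0 e0 f1 e1 fm em f2 e2 E1 (erefl (0:F)) (erefl (0:F)) (erefl (0:F))).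
  by rewrite /cev; field; rewrite ?Hk0 ?n2 ?n6.
have d20 : (p0*r0^+2 + q0*s0^+2 + p1*r1^+2 + q1*s1^+2 + pm*rm^+2 + qm*sm^+2 + p2*r2^+2 + q2*s2^+2) - a20 = 0 by rewrite Ha20 subrr.
have Ha21 : a21 = (p0*r0^+2*0 + q0*s0^+2*0 + p1*r1^+2*1 + q1*s1^+2*1 + pm*rm^+2*(-1) + qm*sm^+2*(-1) + p2*r2^+2*2 + q2*s2^+2*2).
  apply: (lc20 (k1 := (- (0 * p0) / C0 c)) (k2 := (- (0 * q0) / C0 c)) (k3 := (- p1 / C0 c)) (k4 := (- q1 / C0 c)) (k5 := (- ((-1) * pm) / C0 c)) (k6 := (- ((-1) * qm) / C0 c)) (k7 := (- (2 * p2) / C0 c)) (k8 := (- (2 * q2) / C0 c)) (k9 := (0 * (C3 c * 0 + C4 c) / C0 c)) (k10 := (0 * (C1 c * 0^+2 + C5 c * 0 + C2 c) / C0 c)) (k11 := ((C3 c * 1 + C4 c) / C0 c)) (k12 := ((C1 c * 1^+2 + C5 c * 1 + C2 c) / C0 c)) (k13 := ((-1) * (C3 c * (-1) + C4 c) / C0 c)) (k14 := ((-1) * (C1 c * (-1)^+2 + C5 c * (-1) + C2 c) / C0 c)) (k15 := (2 * (C3 c * 2 + C4 c) / C0 c)) (k16 := (2 * (C1 c * 2^+2 + C5 c * 2 + C2 c) / C0 c)) (k17 := (1 / C0 c)) (k18 := 0) (k19 := 0) (k20 := 0) h0 g0 h1 g1 hm gm h2 g2 f0 e0 f1 e1 fm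 em f2 e2 E3 (erefl (0:F)) (erefl (0:F)) (erefl (0:F))).
  by rewrite /cev; field; rewrite ?Hk0 ?n2 ?n6.
have d21 : (p0*r0^+2*0 + q0*s0^+2*0 + p1*r1^+2*1 + q1*s1^+2*1 + pm*rm^+2*(-1) + qm*sm^+2*(-1) + p2*r2^+2*2 + q2*s2^+2*2) - a21 = 0 by rewrite Ha21 subrr.
have Ha30 : a30 = (p0*r0^+3 + q0*s0^+3 + p1*r1^+3 + q1*s1^+3 + pm*rm^+3 + qm*sm^+3 + p2*r2^+3 + q2*s2^+3).
  apply: (lc20 (k1 := (- (p0 * r0) / C0 c)) (k2 := (- (q0 * s0) / C0 c)) (k3 := (- (p1 * r1) / C0 c)) (k4 := (- (q1 * s1) / C0 c)) (k5 := (- (pm * rm) / C0 c)) (k6 := (- (qm * sm) / C0 c)) (k7 := (- (p2 * r2) / C0 c)) (k8 := (- (q2 * s2) / C0 c)) (k9 := ((C1 c * 0^+2 + C5 c * 0 + C2 c) / C0 c)) (k10 := ((C1 c * 1^+2 + C5 c * 1 + C2 c) / C0 c)) (k11 := ((C1 c * (-1)^+2 + C5 c * (-1) + C2 c) / C0 c)) (k12 := ((C1 c * 2^+2 + C5 c * 2 + C2 c) / C0 c)) (k13 := (C3 c / C0 c)) (k14 := (C4 c / C0 c)) (k15 := (1 / C0 c)) (k16 := 0) (k17 := 0) (k18 := 0) (k19 := 0) (k20 := 0) h0 g0 h1 g1 hm gm h2 g2 f0 f1 fm f2 d21 d20 E2 (erefl (0:F)) (erefl (0:F)) (erefl (0:F))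 (erefl (0:F)) (erefl (0:F))).
  by rewrite /cev; field; rewrite ?Hk0 ?n2 ?n6.
rewrite Ha00 Ha01 Ha02 Ha03 Ha10 Ha11 Ha12 Ha20 Ha21 Ha30.
have -> : Lam (p0 + q0 + p1 + q1 + pm + qm + p2 + q2) (p0*0 + q0*0 + p1*1 + q1*1 + pm*(-1) + qm*(-1) + p2*2 + q2*2) (p0*r0 + q0*s0 + p1*r1 + q1*s1 + pm*rm + qm*sm + p2*r2 + q2*s2) (p0*0^+2 + q0*0^+2 + p1*1^+2 + q1*1^+2 + pm*(-1)^+2 + qm*(-1)^+2 + p2*2^+2 + q2*2^+2) (p0*r0*0 + q0*s0*0 + p1*r1*1 + q1*s1*1 + pm*rm*(-1) + qm*sm*(-1) + p2*r2*2 + q2*s2*2) (p0*r0^+2 + q0*s0^+2 + p1*r1^+2 + q1*s1^+2 + pm*rm^+2 + qm*sm^+2 + p2*r2^+2 + q2*s2^+2) (p0*0^+3 + q0*0^+3 + p1*1^+3 + q1*1^+3 + pm*(-1)^+3 + qm*(-1)^+3 + p2*2^+3 + q2*2^+3) (p0*r0*0^+2 + q0*s0*0^+2 + p1*r1*1^+2 + q1*s1*1^+2 + pm*rm*(-1)^+2 + qm*sm*(-1)^+2 + p2*r2*2^+2 + q2*s2*2^+2) (p0*r0^+2*0 + q0*s0^+2*0 + p1*r1^+2*1 + q1*s1^+2*1 + pm*rm^+2*(-1) + qm*sm^+2*(-1) + p2*r2^+2*2 + q2*s2^+2*2) (p0*r0^+3 + q0*s0^+3 + p1*r1^+3 + q1*s1^+3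 + pm*rm^+3 + qm*sm^+3 + p2*r2^+3 + q2*s2^+3) = p0 *: Xz r0 0 + q0 *: Xz s0 0 + p1 *: Xz r1 1 + q1 *: Xz s1 1 + pm *: Xz rm (-1) + qm *: Xz sm (-1) + p2 *: Xz r2 2 + q2 *: Xz s2 2.
  apply/matrixP; apply: ord5_cases; apply: ord5_cases; by rewrite !mxE /=; ring.
apply: spanA_add; last by apply: spanA_one; apply: coneA_pt; rewrite conic_row3.
apply: spanA_add; last by apply: spanA_one; apply: coneA_pt; rewrite conic_row3.
apply: spanA_add; last by apply: spanA_one; apply: coneA_pt; rewrite conic_row3.
apply: spanA_add; last by apply: spanA_one; apply: coneA_pt; rewrite conic_row3.
apply: spanA_add; last by apply: spanA_one; apply: coneA_pt; rewrite conic_row3.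
apply: spanA_add; last by apply: spanA_one; apply: coneA_pt; rewrite conic_row3.
apply: spanA_add; last by apply: spanA_one; apply: coneA_pt; rewrite conic_row3.
by apply: spanA_one; apply: coneA_pt; rewrite conic_row3.
Qed.

End Main.


Definition vv0 (R : comPzRingType) (x0 x1 x2 x3 x4 x5 : R) := -2 * x1 * x3 * x5 + x1 * x4 ^+ 2 + 3 * x1 ^+ 2 * x4 + 2 * x1 ^+ 3 + x2 * x3 ^+ 2 - x3 * x4 * x5.
Definition vv2 (R : comPzRingType) (x0 x1 x2 x3 x4 x5 : R) := x1 * x2 * x4 + 2 * x1 ^+ 2 * x2 - x2 * x3 * x5.
Definition vv3 (R : comPzRingType) (x0 x1 x2 x3 x4 x5 : R) := x1 * x2 * x5 - x2 ^+ 2 * x3.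
Definition vv4 (R : comPzRingType) (x0 x1 x2 x3 x4 x5 : R) := -2 * x1 * x2 ^+ 2 + x2 * x5 ^+ 2 - x2 ^+ 2 * x4.
Definition SuvG (R : comPzRingType) (x0 x1 x2 x3 x4 x5 : R) :=
  x5 * (vv2 x0 x1 x2 x3 x4 x5) + x4 * (vv3 x0 x1 x2 x3 x4 x5) - x3 * (vv4 x0 x1 x2 x3 x4 x5).
Definition SvvG (R : comPzRingType) (x0 x1 x2 x3 x4 x5 : R) :=
  2 * (x2 * (vv0 x0 x1 x2 x3 x4 x5) * (vv2 x0 x1 x2 x3 x4 x5) - x5 * (vv0 x0 x1 x2 x3 x4 x5) * (vv3 x0 x1 x2 x3 x4 x5) + x1 * (vv0 x0 x1 x2 x3 x4 x5) * (vv4 x0 x1 x2 x3 x4 x5) + x3 * (vv2 x0 x1 x2 x3 x4 x5) * (vv3 x0 x1 x2 x3 x4 x5) + x0 * (vv2 x0 x1 x2 x3 x4 x5) * (vv4 x0 x1 x2 x3 x4 x5))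
  + (-2 * x1 - 2 * x4) * (vv2 x0 x1 x2 x3 x4 x5) ^+ 2 - 2 * x0 * (vv3 x0 x1 x2 x3 x4 x5) ^+ 2.
Definition GG (R : comPzRingType) (x0 x1 x2 x3 x4 x5 : R) := (-2 * x2) * (SvvG x0 x1 x2 x3 x4 x5) - (SuvG x0 x1 x2 x3 x4 x5) ^+ 2.
Definition PhiG (R : comPzRingType) (x0 x1 x2 x3 x4 x5 : R) :=
  x0 * discG x0 x1 x2 x3 x4 x5 0 * discG x0 x1 x2 x3 x4 x5 1 *
  discG x0 x1 x2 x3 x4 x5 (-1) * discG x0 x1 x2 x3 x4 x5 2 * (GG x0 x1 x2 x3 x4 x5).

Section Main2.
Variable F : closedFieldType.
Hypothesis HF : [pchar F] =i pred0.
Local Notation two_neq0 := (two_neq0 HF).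
Local Notation natF_neq0 := (natF_neq0 HF).

Notation i0 := (@Ordinal 5 0 isT).
Notation i1 := (@Ordinal 5 1 isT).
Notation i2 := (@Ordinal 5 2 isT).
Notation i3 := (@Ordinal 5 3 isT).
Notation i4 := (@Ordinal 5 4 isT).

Lemma sum5 (f : 'I_5 -> F) : \sum_(i < 5) f i = f i0 + f i1 + f i2 + f i3 + f i4.
Proof.
rewrite !big_ord_recl big_ord0 addr0 !addrA.
by repeat congr (_ + _); congr f; apply/val_inj.
Qed.

Lemma natF_inj : injective (fun n : nat => (n%:R : F)).
Proof.
move=> m n /= H.
wlog le_mn : m n H / (m <= n)%N.
  by move=> W; case: (leqP m n) => [|/ltnW] h; [|symmetry]; apply: W.
have : ((n - m)%N%:R : F) == 0 by rewrite natrB // H subrr.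
move/pcharf0P: HF => ->; rewrite subn_eq0 => h.
by apply/eqP; rewrite eqn_leq le_mn h.
Qed.

Lemma poly9_zero (E : nat -> F) : (forall x, (\poly_(i < 9) E i).[x] = 0) ->
  forall i, (i < 9)%N -> E i = 0.
Proof.
move=> H.
have Hp : \poly_(i < 9) E i = 0.
  case: (eqVneq (\poly_(i < 9) E i) 0) => // Hn; exfalso.
  have := max_poly_roots Hn (rs := [seq (n%:R : F) | n <- iota 0 9]).
  rewrite size_map size_iota.
  have -> : all (root (\poly_(i < 9) E i)) [seq (n%:R : F) | n <- iota 0 9].
    by apply/allP => x _; rewrite /root H.
  rewrite (map_inj_uniq natF_inj) iota_uniq => /(_ isT isT).
  by rewrite ltnNge size_poly.
move=> i Hi; have := congr1 (fun p : {poly F} => p`_i) Hp.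
by rewrite coef_poly Hi coef0.
Qed.

Lemma sum9 (f : 'I_9 -> F) : \sum_(i < 9) f i =
  f (@Ordinal 9 0 isT) + f (@Ordinal 9 1 isT) + f (@Ordinal 9 2 isT) + f (@Ordinal 9 3 isT) +
  f (@Ordinal 9 4 isT) + f (@Ordinal 9 5 isT) + f (@Ordinal 9 6 isT) + f (@Ordinal 9 7 isT) +
  f (@Ordinal 9 8 isT).
Proof.
rewrite !big_ord_recl big_ord0 addr0 !addrA.
by repeat congr (_ + _); congr f; apply/val_inj.
Qed.

Lemma B_rel (S : 'M[F]_5) : S^T = S -> (forall s, qf S (ver4 s 1) = 0) ->
  [/\ S i0 i0 = 0, S i0 i1 = 0, S i1 i1 = - 2 * S i0 i2, S i1 i2 = - S i0 i3 &
  [/\ S i2 i2 = - 2 * S i0 i4 - 2 * S i1 i3, S i2 i3 = - S i1 i4, S i3 i3 = - 2 * S i2 i4,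
      S i3 i4 = 0 & S i4 i4 = 0]].
Proof.
move=> HS Hq.
have sym : forall i j, S j i = S i j.
  by move=> i j; rewrite -{1}HS mxE.
pose E := fun m => nth 0
  [:: S i4 i4; S i3 i4 + S i4 i3; S i2 i4 + S i3 i3 + S i4 i2; S i1 i4 + S i2 i3 + S i3 i2 + S i4 i1;
      S i0 i4 + S i1 i3 + S i2 i2 + S i3 i1 + S i4 i0; S i0 i3 + S i1 i2 + S i2 i1 + S i3 i0;
      S i0 i2 + S i1 i1 + S i2 i0; S i0 i1 + S i1 i0; S i0 i0] m.
have HE : forall x, (\poly_(i < 9) E i).[x] = 0.
  move=> x; rewrite -(Hq x) horner_poly /qf /E /ver4.
  rewrite sum9.
  rewrite !mxE !sum5 !mxE !sum5 !mxE /=.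
  ring.
have Z := poly9_zero HE.
have n2 : (2 : F) != 0 := two_neq0.
have h0 := Z 0%N isT; have h1 := Z 1%N isT; have h2 := Z 2%N isT.
have h3 := Z 3%N isT; have h4 := Z 4%N isT; have h5 := Z 5%N isT.
have h6 := Z 6%N isT; have h7 := Z 7%N isT; have h8 := Z 8%N isT.
rewrite /E /= in h0 h1 h2 h3 h4 h5 h6 h7 h8.
rewrite (sym i3 i4) in h1; rewrite (sym i2 i4) in h2; rewrite (sym i1 i4) (sym i2 i3) in h3.
rewrite (sym i0 i4) (sym i1 i3) in h4; rewrite (sym i0 i3) (sym i1 i2) in h5.
rewrite (sym i0 i2) in h6; rewrite (sym i0 i1) in h7.
have half : forall e : F, 2 * e = 0 -> e = 0.
  by move=> e /eqP; rewrite mulf_eq0 (negbTE n2) => /eqP.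
have lin0 : forall x y e : F, e = 0 -> x - y = e -> x = y.
  by move=> x y e -> /eqP; rewrite subr_eq0 => /eqP.
split; [done| | | |split].
- by apply: half; rewrite -h7; ring.
- by apply: (lin0 _ _ _ h6); ring.
- by apply/eqP; rewrite -addr_eq0; apply/eqP/half; rewrite -h5; ring.
- by apply: (lin0 _ _ _ h4); ring.
- by apply/eqP; rewrite -addr_eq0; apply/eqP/half; rewrite -h3; ring.
- by apply: (lin0 _ _ _ h2); ring.
- by apply: half; rewrite -h1; ring.
- done.
Qed.

Lemma roots_pt (k0 k1 k2 k3 k4 k5 t : F) :
  k0 != 0 -> discG k0 k1 k2 k3 k4 k5 t != 0 ->
  exists r r', [/\ cev k0 k1 k2 k3 k4 k5 r t = 0, cev k0 k1 k2 k3 k4 k5 r' t = 0 & r - r' != 0].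
Proof.
move=> Hk0 Hd; have [s Hs] := sqrt_ex (discG k0 k1 k2 k3 k4 k5 t).
have Hs0 : s != 0 by apply: contraNneq Hd => Hs0; rewrite -Hs Hs0 expr0n.
have H2 := two_neq0; have H4 := four_neq0 HF.
pose B := k3 * t + k4.
exists ((- B + s) / (2 * k0)), ((- B - s) / (2 * k0)); split.
- rewrite /cev; transitivity ((s ^+ 2 - discG k0 k1 k2 k3 k4 k5 t) / (4 * k0)).
    by rewrite /discG /B; field; rewrite H4 Hk0.
  by rewrite Hs subrr mul0r.
- rewrite /cev; transitivity ((s ^+ 2 - discG k0 k1 k2 k3 k4 k5 t) / (4 * k0)).
    by rewrite /discG /B; field; rewrite H4 Hk0.
  by rewrite Hs subrr mul0r.
- have -> : (- B + s) / (2 * k0) - (- B - s) / (2 * k0) = s / k0.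
    by field; rewrite H2 Hk0.
  by rewrite mulf_neq0 // invr_neq0.
Qed.

Lemma line_pt (c0 c1 c2 c3 c4 c5 k0 k1 k2 k3 k4 k5 t : F) :
  c0 != 0 -> discG c0 c1 c2 c3 c4 c5 t != 0 ->
  (forall r, cev c0 c1 c2 c3 c4 c5 r t = 0 -> cev k0 k1 k2 k3 k4 k5 r t = 0) ->
  (k3 - k0 / c0 * c3) * t + (k4 - k0 / c0 * c4) = 0 /\
  (k1 - k0 / c0 * c1) * t ^+ 2 + (k5 - k0 / c0 * c5) * t + (k2 - k0 / c0 * c2) = 0.
Proof.
move=> Hc0 Hd H.
have [r [r' [h h' hne]]] := roots_pt Hc0 Hd.
set d := (k3 - k0 / c0 * c3) * t + (k4 - k0 / c0 * c4).
set e := (k1 - k0 / c0 * c1) * t ^+ 2 + (k5 - k0 / c0 * c5) * t + (k2 - k0 / c0 * c2).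
have D : forall x, cev k0 k1 k2 k3 k4 k5 x t - k0 / c0 * cev c0 c1 c2 c3 c4 c5 x t = d * x + e.
  by move=> x; rewrite /cev /d /e; field.
have E1 : d * r + e = 0 by rewrite -D h (H _ h) mulr0 subr0.
have E2 : d * r' + e = 0 by rewrite -D h' (H _ h') mulr0 subr0.
have Hd0 : d = 0.
  have : d * (r - r') = 0.
    transitivity ((d * r + e) - (d * r' + e)); first by ring.
    by rewrite E1 E2 subrr.
  by move/eqP; rewrite mulf_eq0 (negbTE hne) orbF => /eqP.
by split => //; rewrite -E1 Hd0 mul0r add0r.
Qed.

Lemma conic_prop (c0 c1 c2 c3 c4 c5 k0 k1 k2 k3 k4 k5 : F) :
  c0 != 0 -> discG c0 c1 c2 c3 c4 c5 0 != 0 -> discG c0 c1 c2 c3 c4 c5 1 != 0 ->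
  discG c0 c1 c2 c3 c4 c5 (-1) != 0 ->
  (forall r t, cev c0 c1 c2 c3 c4 c5 r t = 0 -> cev k0 k1 k2 k3 k4 k5 r t = 0) ->
  [/\ k1 = k0 / c0 * c1, k2 = k0 / c0 * c2, k3 = k0 / c0 * c3, k4 = k0 / c0 * c4
     & k5 = k0 / c0 * c5].
Proof.
move=> Hc0 Hd0 Hd1 Hdm H.
have [a0 b0] := line_pt Hc0 Hd0 (H^~ 0).
have [a1 b1] := line_pt Hc0 Hd1 (H^~ 1).
have [am bm] := line_pt Hc0 Hdm (H^~ (-1)).
have half : forall e : F, 2 * e = 0 -> e = 0.
  by move=> e /eqP; rewrite mulf_eq0 (negbTE two_neq0) => /eqP.
have lin0 : forall x y e : F, e = 0 -> x - y = e -> x = y.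
  by move=> x y e -> /eqP; rewrite subr_eq0 => /eqP.
have h4 : k4 = k0 / c0 * c4 by apply: (lin0 _ _ _ a0); ring.
have h2 : k2 = k0 / c0 * c2 by apply: (lin0 _ _ _ b0); ring.
have h3 : k3 = k0 / c0 * c3 by apply: (lin0 _ _ _ a1); rewrite h4; ring.
have h1 : k1 = k0 / c0 * c1.
  apply/eqP; rewrite -subr_eq0; apply/eqP/half.
  transitivity (((k1 - k0 / c0 * c1) * 1 ^+ 2 + (k5 - k0 / c0 * c5) * 1 + (k2 - k0 / c0 * c2)) + ((k1 - k0 / c0 * c1) * (-1) ^+ 2 + (k5 - k0 / c0 * c5) * (-1) + (k2 - k0 / c0 * c2)) - 2 * (k2 - k0 / c0 * c2)); first by ring.
  by rewrite b1 bm h2 subrr mulr0 addr0 subr0.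
have h5 : k5 = k0 / c0 * c5 by apply: (lin0 _ _ _ b1); rewrite h1 h2; ring.
by [].
Qed.

Definition Scm (c0 c1 c2 c3 c4 c5 : F) : 'M[F]_5 :=
  \matrix_(i < 5, j < 5) nth 0 (nth [::]
    [:: [:: 0; 0; c2; - c5; c1];
        [:: 0; -2 * c2; c5; c4; - c3];
        [:: c2; c5; -2 * c1 - 2 * c4; c3; c0];
        [:: - c5; c4; c3; -2 * c0; 0];
        [:: c1; - c3; c0; 0; 0]] i) j.

Lemma qf_w2 (S : 'M[F]_5) r t : S^T = S ->
  S i0 i0 = 0 -> S i0 i1 = 0 -> S i1 i1 = - 2 * S i0 i2 -> S i1 i2 = - S i0 i3 ->
  S i2 i2 = - 2 * S i0 i4 - 2 * S i1 i3 -> S i2 i3 = - S i1 i4 -> S i3 i3 = - 2 * S i2 i4 ->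
  S i3 i4 = 0 -> S i4 i4 = 0 ->
  qf S (w2 r t) = -2 * cev (S i2 i4) (S i0 i4) (S i0 i2) (- S i1 i4) (S i1 i3) (- S i0 i3) r t.
Proof.
move=> HS h00 h01 h11 h12 h22 h23 h33 h34 h44.
have sym : forall i j, S j i = S i j by move=> i j; rewrite -{1}HS mxE.
rewrite /qf /w2 /row5 !mxE !sum5 !mxE !sum5 !mxE /=.
rewrite (sym i0 i1) (sym i0 i2) (sym i0 i3) (sym i0 i4) (sym i1 i2) (sym i1 i3) (sym i1 i4).
rewrite (sym i2 i3) (sym i2 i4) (sym i3 i4).
rewrite h00 h01 h11 h12 h22 h23 h33 h34 h44 /cev.
ring.
Qed.

Lemma S_det (S : 'M[F]_5) (c : 'I_6 -> F) : S^T = S ->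
  (forall s, qf S (ver4 s 1) = 0) ->
  (forall r t, conic_eval c (row3 r t 1) = 0 -> qf S (w2 r t) = 0) ->
  C0 c != 0 -> discG (C0 c) (C1 c) (C2 c) (C3 c) (C4 c) (C5 c) 0 != 0 ->
  discG (C0 c) (C1 c) (C2 c) (C3 c) (C4 c) (C5 c) 1 != 0 ->
  discG (C0 c) (C1 c) (C2 c) (C3 c) (C4 c) (C5 c) (-1) != 0 ->
  S = (S i2 i4 / C0 c) *: Scm (C0 c) (C1 c) (C2 c) (C3 c) (C4 c) (C5 c).
Proof.
move=> HS HB Hc Hc0 Hd0 Hd1 Hdm.
have [h00 h01 h11 h12 [h22 h23 h33 h34 h44]] := B_rel HS HB.
have sym : forall i j, S j i = S i j by move=> i j; rewrite -{1}HS mxE.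
have K : forall r t, cev (C0 c) (C1 c) (C2 c) (C3 c) (C4 c) (C5 c) r t = 0 ->
   cev (S i2 i4) (S i0 i4) (S i0 i2) (- S i1 i4) (S i1 i3) (- S i0 i3) r t = 0.
  move=> r t H.
  have := Hc r t; rewrite conic_row3 => /(_ H).
  rewrite (qf_w2 r t HS h00 h01 h11 h12 h22 h23 h33 h34 h44) => /eqP.
  by rewrite mulf_eq0 oppr_eq0 (negbTE two_neq0) /= => /eqP.
have [e1 e2 e3 e4 e5] := conic_prop Hc0 Hd0 Hd1 Hdm K.
have e3' : S i1 i4 = - (S i2 i4 / C0 c * C3 c) by rewrite -e3 opprK.
have e5' : S i0 i3 = - (S i2 i4 / C0 c * C5 c) by rewrite -e5 opprK.
have e0 : S i2 i4 = S i2 i4 / C0 c * C0 c by rewrite divfK.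
apply/matrixP; apply: ord5_cases; apply: ord5_cases; rewrite !mxE /=;
  rewrite ?h00 ?h01 ?h11 ?h12 ?h22 ?h23 ?h33 ?h34 ?h44;
  rewrite ?(sym i0 i1) ?(sym i0 i2) ?(sym i0 i3) ?(sym i0 i4) ?(sym i1 i2) ?(sym i1 i3) ?(sym i1 i4);
  rewrite ?(sym i2 i3) ?(sym i2 i4) ?(sym i3 i4);
  rewrite ?h00 ?h01 ?h11 ?h12 ?h22 ?h23 ?h33 ?h34 ?h44;
  rewrite ?e1 ?e2 ?e3' ?e4 ?e5'; try (by ring); rewrite {1}e0; ring.
Qed.

Definition e1row : 'rV[F]_5 := row5 0 1 0 0 0.
Definition vrow (c : 'I_6 -> F) : 'rV[F]_5 :=
  row5 (vv0 (C0 c) (C1 c) (C2 c) (C3 c) (C4 c) (C5 c)) 0 (vv2 (C0 c) (C1 c) (C2 c) (C3 c) (C4 c) (C5 c))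
    (vv3 (C0 c) (C1 c) (C2 c) (C3 c) (C4 c) (C5 c)) (vv4 (C0 c) (C1 c) (C2 c) (C3 c) (C4 c) (C5 c)).

Lemma P_Lam c : wedge e1row (vrow c) =
  Lam (- vv0 (C0 c) (C1 c) (C2 c) (C3 c) (C4 c) (C5 c)) 0 (vv2 (C0 c) (C1 c) (C2 c) (C3 c) (C4 c) (C5 c)) (vv2 (C0 c) (C1 c) (C2 c) (C3 c) (C4 c) (C5 c)) (- vv3 (C0 c) (C1 c) (C2 c) (C3 c) (C4 c) (C5 c)) 0 (-2 * vv3 (C0 c) (C1 c) (C2 c) (C3 c) (C4 c) (C5 c)) (vv4 (C0 c) (C1 c) (C2 c) (C3 c) (C4 c) (C5 c)) 0 0.
Proof.
apply/matrixP; apply: ord5_cases; apply: ord5_cases;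
  by rewrite wedgeE !mxE /=; ring.
Qed.

Lemma P_T c : C0 c != 0 ->
  discG (C0 c) (C1 c) (C2 c) (C3 c) (C4 c) (C5 c) 0 != 0 -> discG (C0 c) (C1 c) (C2 c) (C3 c) (C4 c) (C5 c) 1 != 0 -> discG (C0 c) (C1 c) (C2 c) (C3 c) (C4 c) (C5 c) (-1) != 0 -> discG (C0 c) (C1 c) (C2 c) (C3 c) (C4 c) (C5 c) 2 != 0 ->
  wedge e1row (vrow c) != 0 -> Tset 1 c (wedge e1row (vrow c)).
Proof.
move=> H0 Hd0 Hd1 Hdm Hd2 Hne; split; last by exists e1row, (vrow c).
rewrite P_Lam; apply: spanA_Lam => //; rewrite /vv0 /vv2 /vv3 /vv4; ring.
Qed.

Lemma bil_scale (S : 'M[F]_5) a x y : bil (a *: S) x y = a * bil S x y.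
Proof. by rewrite /bil -scalemxAr -scalemxAl mxE. Qed.

Lemma gram_vals c :
  [/\ bil (Scm (C0 c) (C1 c) (C2 c) (C3 c) (C4 c) (C5 c)) e1row e1row = -2 * C2 c, bil (Scm (C0 c) (C1 c) (C2 c) (C3 c) (C4 c) (C5 c)) e1row (vrow c) = SuvG (C0 c) (C1 c) (C2 c) (C3 c) (C4 c) (C5 c),
      bil (Scm (C0 c) (C1 c) (C2 c) (C3 c) (C4 c) (C5 c)) (vrow c) e1row = SuvG (C0 c) (C1 c) (C2 c) (C3 c) (C4 c) (C5 c) & bil (Scm (C0 c) (C1 c) (C2 c) (C3 c) (C4 c) (C5 c)) (vrow c) (vrow c) = SvvG (C0 c) (C1 c) (C2 c) (C3 c) (C4 c) (C5 c)].
Proof.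
rewrite /bil /Scm /e1row /vrow /row5 /SuvG /SvvG.
by split; rewrite !mxE !sum5 !mxE !sum5 !mxE /=; ring.
Qed.

Lemma bil_tr (S M : 'M[F]_5) x y : bil S (x *m M) (y *m M) = bil (M *m S *m M^T) x y.
Proof. by rewrite /bil trmx_mul !mulmxA. Qed.

Lemma bilDl (S : 'M[F]_5) a b x y z : bil S (a *: x + b *: y) z = a * bil S x z + b * bil S y z.
Proof. by rewrite /bil !mxE !sum5 ?mxE ?sum5 ?mxE; ring. Qed.

Lemma bilDr (S : 'M[F]_5) a b x y z : bil S z (a *: x + b *: y) = a * bil S z x + b * bil S z y.
Proof. by rewrite /bil !mxE !sum5 ?mxE ?sum5 ?mxE; ring. Qed.

Lemma wedge_span (x y u v : 'rV[F]_5) : wedge x y = wedge u v -> wedge u v != 0 ->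
  exists a b, u = a *: x + b *: y.
Proof.
move=> Heq Hne.
case: (pickP (fun p : 'I_5 * 'I_5 => wedge u v p.1 p.2 != 0)) => [[i j] /= HW|H]; last first.
  case/negP: Hne; apply/eqP/matrixP => i j.
  by have := H (i, j); rewrite /= => /negbFE /eqP ->; rewrite mxE.
have E : forall k l, x 0 k * y 0 l - y 0 k * x 0 l = u 0 k * v 0 l - v 0 k * u 0 l.
  by move=> k l; rewrite -!wedgeE Heq.
rewrite wedgeE in HW.
exists ((u 0 i * y 0 j - u 0 j * y 0 i) / (u 0 i * v 0 j - v 0 i * u 0 j)),
  ((u 0 j * x 0 i - u 0 i * x 0 j) / (u 0 i * v 0 j - v 0 i * u 0 j)).
apply/rowP => k; rewrite !mxE.
have key : (u 0 i * y 0 j - u 0 j * y 0 i) * x 0 k + (u 0 j * x 0 i - u 0 i * x 0 j) * y 0 k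
    = u 0 k * (u 0 i * v 0 j - v 0 i * u 0 j).
  transitivity (u 0 j * (x 0 i * y 0 k - y 0 i * x 0 k) - u 0 i * (x 0 j * y 0 k - y 0 j * x 0 k)).
    by ring.
  by rewrite !E; ring.
transitivity (((u 0 i * y 0 j - u 0 j * y 0 i) * x 0 k + (u 0 j * x 0 i - u 0 i * x 0 j) * y 0 k)
   / (u 0 i * v 0 j - v 0 i * u 0 j)); last by field.
by rewrite key; field.
Qed.

Lemma wedge_swap (u v : 'rV[F]_5) : wedge v (- u) = wedge u v.
Proof. by apply/matrixP => i j; rewrite !wedgeE !mxE; ring. Qed.

Lemma no_tan (S : 'M[F]_5) (u v u' v' : 'rV[F]_5) :
  wedge u' v' = wedge u v -> wedge u v != 0 -> tangent_line S u' v' ->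
  bil S u u * bil S v v - bil S u v * bil S v u = 0.
Proof.
move=> Heq Hne [a [b [Hp0 [_ [Hu Hv]]]]].
have Hne' : wedge u' v' != 0 by rewrite Heq.
have [al [be Eu]] := wedge_span Heq Hne.
have [ga [de Ev]] : exists g d, v = g *: u' + d *: v'.
  by apply: (wedge_span (u := v) (v := - u)); rewrite wedge_swap.
have [al' [be' Eu']] := wedge_span (esym Heq) Hne'.
have [ga' [de' Ev']] : exists g d, v' = g *: u + d *: v.
  by apply: (wedge_span (u := v') (v := - u')); rewrite wedge_swap.
set p := a *: u' + b *: v' in Hp0 Hu Hv.
have Hp : p = (a * al' + b * ga') *: u + (a * be' + b * de') *: v.
  by rewrite /p Eu' Ev' !scalerDr !scalerA addrACA -!scalerDl.
have B1 : bil S u p = 0 by rewrite Eu bilDl Hu Hv !mulr0 addr0.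
have B2 : bil S v p = 0 by rewrite Ev bilDl Hu Hv !mulr0 addr0.
rewrite Hp bilDr in B1; rewrite Hp bilDr in B2.
set A := a * al' + b * ga' in Hp B1 B2; set B := a * be' + b * de' in Hp B1 B2.
apply/eqP/negPn/negP => Hd; case/negP: Hp0.
have hA : A = 0.
  suff : A * (bil S u u * bil S v v - bil S u v * bil S v u) = 0 by move/eqP; rewrite mulf_eq0 (negbTE Hd) orbF => /eqP.
  transitivity ((A * bil S u u + B * bil S u v) * bil S v v - (A * bil S v u + B * bil S v v) * bil S u v); first by ring.
  by rewrite B1 B2; ring.
have hB : B = 0.
  suff : B * (bil S u u * bil S v v - bil S u v * bil S v u) = 0 by move/eqP; rewrite mulf_eq0 (negbTE Hd) orbF => /eqP.
  transitivity ((A * bil S v u + B * bil S v v) * bil S u u - (A * bil S u u + B * bil S u v) * bil S v u); first by ring.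
  by rewrite B1 B2; ring.
by rewrite Hp hA hB !scale0r addr0.
Qed.
End Main2.

Lemma PhiG_morph (R S : comPzRingType) (f : {rmorphism R -> S}) (x0 x1 x2 x3 x4 x5 : R) :
  f (PhiG x0 x1 x2 x3 x4 x5) = PhiG (f x0) (f x1) (f x2) (f x3) (f x4) (f x5).
Proof.
rewrite /PhiG /GG /SvvG /SuvG /vv0 /vv2 /vv3 /vv4 /discG.
by rewrite !(rmorphB, rmorphD, rmorphM, rmorphXn, rmorphN, rmorph_nat, rmorph0, rmorph1).
Qed.

Lemma PhiG_star (F : fieldType) : PhiG (-1 : F) (-1) (-1) 0 0 0 = - (2 ^+ 15 * 5).
Proof. rewrite /PhiG /GG /SvvG /SuvG /vv0 /vv2 /vv3 /vv4 /discG; ring. Qed.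

Lemma qf_tr (F : closedFieldType) (S M : 'M[F]_5) x : qf S (x *m M) = qf (M *m S *m M^T) x.
Proof. by rewrite /qf trmx_mul !mulmxA. Qed.

Lemma row_unit_neq0 (F : fieldType) (M : 'M[F]_5) (x : 'rV[F]_5) :
  M \in unitmx -> x != 0 -> x *m M != 0.
Proof.
move=> HM; apply: contra => /eqP H.
by have := congr1 (fun y => y *m invmx M) H; rewrite mulmxK // mul0mx => ->.
Qed.

Notation j0 := (@Ordinal 6 0 isT).
Notation j1 := (@Ordinal 6 1 isT).
Notation j2 := (@Ordinal 6 2 isT).
Notation j3 := (@Ordinal 6 3 isT).
Notation j4 := (@Ordinal 6 4 isT).
Notation j5 := (@Ordinal 6 5 isT).

Theorem lemma6p1 (F : closedFieldType) (HF : [pchar F] =i pred0)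
    (M : 'M[F]_5) (HM : M \in unitmx) :
  exists Phi : {mpoly F[6]}, Phi != 0 /\
    forall c : 'I_6 -> F, Phi.@[c] != 0 ->
      forall S : 'M[F]_5, quadric_for M c S ->
        ~ (forall P : 'M[F]_5, Tset M c P -> Wtan S P).
Proof.
have evPhi : forall c : 'I_6 -> F,
    (PhiG 'X_j0 'X_j1 'X_j2 'X_j3 'X_j4 'X_j5 : {mpoly F[6]}).@[c] =
    PhiG (C0 c) (C1 c) (C2 c) (C3 c) (C4 c) (C5 c).
  by move=> c; rewrite PhiG_morph; congr PhiG; exact: mevalXU.
exists (PhiG 'X_j0 'X_j1 'X_j2 'X_j3 'X_j4 'X_j5); split.
  apply/negP => /eqP H0.
  have := congr1 (meval (fun i : 'I_6 => if (i < 3)%N then -1 else 0 : F)) H0.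
  rewrite evPhi meval0 /C0 /C1 /C2 /C3 /C4 /C5 /= PhiG_star => /eqP.
  rewrite oppr_eq0 mulf_eq0 expf_eq0 /=.
  by rewrite (negbTE (two_neq0 HF)) (negbTE (natF_neq0 HF 4)).
move=> c Hphi S [HST [HS0 [HB HR]]] Hall.
move: Hphi; rewrite evPhi /PhiG !mulf_eq0 !negb_or.
move=> /andP[/andP[/andP[/andP[/andP[H0 Hd0] Hd1] Hdm] Hd2] HG].
pose S' := M *m S *m M^T.
have HS'T : S'^T = S' by rewrite /S' !trmx_mul trmxK HST mulmxA.
have HB' : forall s, qf S' (ver4 s 1) = 0 by move=> s; rewrite -qf_tr HB.
have Hc : forall r t, conic_eval c (row3 r t 1) = 0 -> qf S' (w2 r t) = 0.
  move=> r t Hrt; rewrite -qf_tr.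
  have Hw : w2 r t *m M != 0.
    apply: row_unit_neq0 => //; apply/negP => /eqP /rowP /(_ (@Ordinal 5 1 isT)).
    by rewrite !mxE /= => /eqP; rewrite oner_eq0.
  have [_ H] := HR _ Hw.
  have [] // := H.
  exists (row3 r t 1); split.
    split => //; apply/negP => /eqP /matrixP /(_ 0 (@Ordinal 3 2 isT)).
    by rewrite !mxE /= => /eqP; rewrite oner_eq0.
  by apply: Vz_tr; apply: Vz_rec; ring.
have HS' := S_det HF HS'T HB' Hc H0 Hd0 Hd1 Hdm.
set lam := S' (@Ordinal 5 2 isT) (@Ordinal 5 4 isT) / C0 c in HS'.
have Hlam : lam != 0.
  apply/negP => /eqP Hl; move: HS'; rewrite Hl scale0r /S' => HS0'.
  case/negP: HS0; apply/eqP.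
  have HMt : M^T \in unitmx by rewrite unitmx_tr.
  have := congr1 (fun Y => invmx M *m (Y *m invmx M^T)) HS0'.
  by rewrite mul0mx mulmx0 mulmxK // mulKmx.
have Hne : wedge (e1row F) (vrow c) != 0.
  apply/negP => /eqP Hw; case/negP: HG.
  have Hv : forall k, wedge (e1row F) (vrow c) (@Ordinal 5 1 isT) k = 0 by move=> k; rewrite Hw mxE.
  have := Hv (@Ordinal 5 0 isT); have := Hv (@Ordinal 5 2 isT).
  have := Hv (@Ordinal 5 3 isT); have := Hv (@Ordinal 5 4 isT).
  rewrite !wedgeE /e1row /vrow /row5 !mxE /= !mul1r !mul0r !subr0.
  move=> h4 h3 h2 h0.
  by rewrite /GG /SvvG /SuvG h0 h2 h3 h4; apply/eqP; ring.
have HT := P_T HF H0 Hd0 Hd1 Hdm Hd2 Hne.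
have HTM : Tset M c (wedge ((e1row F) *m M) (vrow c *m M)).
  split; last first.
    exists ((e1row F) *m M), (vrow c *m M); split => //.
    by rewrite wedge_tr; apply: conj_neq0.
  by rewrite wedge_tr; apply: spanA_tr => //; case: HT.
have [u [v [Huv [_ Htan]]]] := Hall _ HTM.
have Hne' : wedge ((e1row F) *m M) (vrow c *m M) != 0 by rewrite wedge_tr; apply: conj_neq0.
have := no_tan (esym Huv) Hne' Htan.
rewrite !bil_tr -/S' HS' !bil_scale.
have [g1 g2 g3 g4] := gram_vals c.
rewrite g1 g2 g3 g4 => /eqP.
have -> : lam * (-2 * C2 c) * (lam * SvvG (C0 c) (C1 c) (C2 c) (C3 c) (C4 c) (C5 c)) -
  lam * SuvG (C0 c) (C1 c) (C2 c) (C3 c) (C4 c) (C5 c) * (lam * SuvG (C0 c) (C1 c) (C2 c) (C3 c) (C4 c) (C5 c))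
  = lam ^+ 2 * GG (C0 c) (C1 c) (C2 c) (C3 c) (C4 c) (C5 c).
  by rewrite /GG; ring.
by rewrite mulf_eq0 expf_eq0 /= (negbTE Hlam) (negbTE HG).
Qed.
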